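(* Let $1\leq\alpha,\beta<\omega$, let $P$ be a poset and $n\in\omega$. Then $P\models\psi_{\alpha\beta n}$ if and only if for all $p,q\in P$ with $p\not\leq q$, $\exists$ has an $n$-strategy for the $(\alpha+1,\beta+1)$-game with starting position $(\{p\},\{q\})$.
   Context: Work in the first-order signature with one binary relation $\leq$; write $\vec{x}_k=(x_1,\ldots,x_k)$. For $1\leq k<\omega$: $J_k(\vec{x}_k,y)$ holds under assignment $v$ iff $v(y)$ is the join of $\{v(x_1),\ldots,v(x_k)\}$, $M_k(\vec{x}_k,y)$ iff $v(y)$ is their meet; $C_k(\vec{x}_k,y)=\bigvee_{i=1}^k(y=x_i)$, $D_k=\neg C_k$; $C_{km}(\vec{x}_k,\vec{y}_m)$ holds iff $\{v(y_j)\}\subseteq\{v(x_i)\}$. Let $\sigma_k(\vec{x}_k,c)=\exists z(C_k(\vec{x}_k,z)\wedge z\leq c)$, $\tau_{kr}(\vec{x}_k,\vec{a}_r,c)=C_{kr}(\vec{x}_k,\vec{a}_r)\wedge M_r(\vec{a}_r,c)$, $\rho_{ks}(\vec{x}_k,\vec{b}_s)=\exists z(C_k(\vec{x}_k,z)\wedge J_s(\vec{b}_s,z))$. Define $\phi_{krs0}(\vec{x}_k,y)=D_k(\vec{x}_k,y)$ and $\phi_{krs(n+1)}(\vec{x}_k,y)=\forall\vec{a}_r\forall\vec{b}_s\forall c\Big(\big(\sigma_k(\vec{x}_k,c)\to\phi_{(k+1)rsn}(\vec{x}_k,c,y)\big)\wedge\big(\tau_{kr}(\vec{x}_k,\vec{a}_r,c)\to\phi_{(k+1)rsn}(\vec{x}_k,c,y)\big)\wedge\big(\rho_{ks}(\vec{x}_k,\vec{b}_s)\to\bigvee_{i=1}^s\phi_{(k+1)rsn}(\vec{x}_k,b_i,y)\big)\Big)$,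 and $\psi_{rsn}=\forall x\forall y(\neg(x\leq y)\to\phi_{1rsn}(x,y))$. The $(\alpha,\beta)$-game on $P$ with starting position $(U_0,V)$ is played between $\forall$ and $\exists$ in rounds $0,1,2,\ldots$ with a set $U$, initially $U_0$, and $V$ fixed. Each round $\forall$ moves and $\exists$ responds: (1) if $b\geq a$ for some $a\in U$, $\forall$ may play $(b)$ and $\exists$ must add $b$ to $U$; (2) if $A\subseteq U$ with $|A|<\alpha$ and $\bigwedge A$ exists, $\forall$ may play $A$ and $\exists$ must add $\bigwedge A$; (3) if $B\subseteq P$ with $|B|<\beta$ and $\bigvee B$ exists and lies in $U$, $\forall$ may play $B$ and $\exists$ must choose some $b\in B$ and add it to $U$. $\forall$ wins in round $n$ if $U\cap V\neq\emptyset$ at the beginning of round $n$; $\exists$ has an $n$-strategy if she can guarantee that $\forall$ does not win until at least round $n+1$. *)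

(* Defs.v *)
From HB Require Import structures.
From mathcomp Require Import all_boot all_order.
Set Implicit Arguments. Unset Strict Implicit. Unset Printing Implicit Defensive.
Import Order.TTheory.
Local Open Scope order_scope.

Section Defs.
Context {d : Order.disp_t} {T : porderType d}.

Definition is_join (S : T -> Prop) (y : T) : Prop :=
  (forall s, S s -> s <= y) /\ (forall z, (forall s, S s -> s <= z) -> y <= z).
Definition is_meet (S : T -> Prop) (y : T) : Prop :=
  (forall s, S s -> y <= s) /\ (forall z, (forall s, S s -> z <= s) -> z <= y).

(* Semantics of the formulas; the assignment to x_1..x_k is the sequence xs
   (k = size xs). *)
Definition sigmaF (xs : seq T) (c : T) : Prop := exists z, z \in xs /\ z <= c.
Definition tauF (r : nat) (xs : seq T) (a : 'I_r -> T) (c : T) : Prop :=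
  (forall j, a j \in xs) /\ is_meet (fun w => exists j, w = a j) c.
Definition rhoF (s : nat) (xs : seq T) (b : 'I_s -> T) : Prop :=
  exists z, z \in xs /\ is_join (fun w => exists j, w = b j) z.

Fixpoint phiF (r s n : nat) (xs : seq T) (y : T) {struct n} : Prop :=
  match n with
  | 0 => y \notin xs
  | n'.+1 =>
      forall (a : 'I_r -> T) (b : 'I_s -> T) (c : T),
        (sigmaF xs c -> phiF r s n' (rcons xs c) y) /\
        (tauF xs a c -> phiF r s n' (rcons xs c) y) /\
        (rhoF xs b -> exists i : 'I_s, phiF r s n' (rcons xs (b i)) y)
  end.

Definition psiF (r s n : nat) : Prop :=
  forall x y : T, ~ (x <= y) -> phiF r s n [:: x] y.

(* The (al, be)-game with current set U and fixed V.
   e_strat al be n U V : Exists has an n-strategy from position (U, V), i.e.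
   she can guarantee that U meets V at the beginning of none of the rounds
   0..n. Finite sets A, B of size < al (resp. < be) are given by sequences. *)
Fixpoint e_strat (al be n : nat) (U V : T -> Prop) {struct n} : Prop :=
  (forall x, ~ (U x /\ V x)) /\
  match n with
  | 0 => True
  | n'.+1 =>
      (forall a b, U a -> a <= b ->
         e_strat al be n' (fun x => U x \/ x = b) V) /\
      (forall (A : seq T) m, (size A < al)%N -> (forall x, x \in A -> U x) ->
         is_meet (fun x => x \in A) m ->
         e_strat al be n' (fun x => U x \/ x = m) V) /\
      (forall (B : seq T) j, (size B < be)%N -> is_join (fun x => x \in B) j -> U j ->
         exists2 b, b \in B & e_strat al be n' (fun x => U x \/ x = b) V)
  end.

End Defs.

(* Main.v *)
Require Import Defs.
From mathcomp Require Import all_boot all_order.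
Local Open Scope order_scope.

Lemma e_strat_ext (d : Order.disp_t) (T : porderType d) al be n (U U' V : T -> Prop) :
  (forall x, U x <-> U' x) -> e_strat al be n U V -> e_strat al be n U' V.
Proof.
elim: n U U' => [|n IH] U U' hU [hd rest].
  by split=> // x [h1 h2]; apply: (hd x); split=> //; apply/hU.
split; first by move=> x [h1 h2]; apply: (hd x); split=> //; apply/hU.
case: rest => [h1 [h2 h3]]; split; [|split].
- move=> a b ha hab; apply: IH (h1 a b (proj2 (hU a) ha) hab).
  by move=> x /=; have := hU x; tauto.
- move=> A m hA hAU hm.
  apply: IH (h2 A m hA (fun x hx => proj2 (hU x) (hAU x hx)) hm).
  by move=> x /=; have := hU x; tauto.
- move=> B j hB hj hUj; have [b hb he] := h3 B j hB hj (proj2 (hU j) hUj).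
  exists b => //; apply: IH he.
  by move=> x /=; have := hU x; tauto.
Qed.

Lemma phi_mem_false (d : Order.disp_t) (T : porderType d) r s n (xs : seq T) y :
  y \in xs -> ~ phiF r s n xs y.
Proof.
elim: n xs => [|n IH] xs hy /=; first by rewrite hy.
move=> H; have [H1 _] := H (fun _ => y) (fun _ => y) y.
apply: (IH (rcons xs y)); first by rewrite mem_rcons mem_head.
by apply: H1; exists y.
Qed.

Lemma rcons_neq0 (T : eqType) (xs : seq T) c : rcons xs c != [::].
Proof. by case: xs. Qed.

Lemma mem_rconsP (T : eqType) (xs : seq T) c x :
  (x \in xs \/ x = c) <-> x \in rcons xs c.
Proof.
rewrite mem_rcons in_cons; split.
  by case=> [->|->]; [rewrite orbT|rewrite eqxx].
by case/orP => [/eqP ->|->]; [right|left].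
Qed.

Lemma nth_mem_cons (T : eqType) (x0 : T) s i : nth x0 (x0 :: s) i \in x0 :: s.
Proof.
case: (ltnP i (size (x0 :: s))) => hi; first exact: mem_nth.
by rewrite nth_default // mem_head.
Qed.

Lemma meet_equiv (d : Order.disp_t) (T : porderType d) (S S' : T -> Prop) m :
  (forall w, S w <-> S' w) -> is_meet S m -> is_meet S' m.
Proof.
move=> hS [h1 h2]; split.
  by move=> w /hS; apply: h1.
by move=> z hz; apply: h2 => w /hS; apply: hz.
Qed.

Lemma join_equiv (d : Order.disp_t) (T : porderType d) (S S' : T -> Prop) m :
  (forall w, S w <-> S' w) -> is_join S m -> is_join S' m.
Proof.
move=> hS [h1 h2]; split.
  by move=> w /hS; apply: h1.
by move=> z hz; apply: h2 => w /hS; apply: hz.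
Qed.

Lemma nth_set (T : eqType) (x0 : T) (s : seq T) r :
  (size (x0 :: s) <= r)%N ->
  forall w, (exists j : 'I_r, w = nth x0 (x0 :: s) j) <-> w \in x0 :: s.
Proof.
move=> hr w; split.
  by case=> j ->; apply: nth_mem_cons.
move=> hw; have hi : (index w (x0 :: s) < r)%N.
  by apply: leq_trans hr; rewrite index_mem.
by exists (Ordinal hi); rewrite /= nth_index.
Qed.

Lemma map_set (T : eqType) r (a : 'I_r -> T) w :
  w \in [seq a i | i <- enum 'I_r] <-> exists j, w = a j.
Proof.
split; first by case/mapP => i _ ->; exists i.
by case=> j ->; apply: map_f; rewrite mem_enum.
Qed.

Lemma main_lemma (d : Order.disp_t) (T : porderType d) r s n (xs : seq T) y :
  xs != [::] ->
  (phiF r s n xs y <->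
   e_strat r.+1 s.+1 n (fun x => x \in xs) (fun x => x = y)).
Proof.
elim: n xs => [|n IH] xs xne.
  rewrite /=; split.
    by move=> H; split=> // x [Hx Hy]; rewrite -Hy Hx in H.
  by move=> [H _]; apply/negP => Hy; exact: (H y (conj Hy erefl)).
split.
- move=> H; split.
    by move=> x [Hx Hy]; rewrite Hy in Hx; exact: phi_mem_false Hx H.
  have sig : forall z c, z \in xs -> z <= c ->
      e_strat r.+1 s.+1 n (fun x => x \in xs \/ x = c) (fun x => x = y).
    move=> z c hz hzc.
    have [H1 _] := H (fun _ => c) (fun _ => c) c.
    have := H1 (ex_intro _ z (conj hz hzc)).
    move/(IH _ (rcons_neq0 _ _ _)); apply: e_strat_ext => x.
    by split; move/mem_rconsP.
  split; [|split].
  + move=> a0 b0 Ha Hab; exact: sig Ha Hab.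
  + move=> A m hA hAU hm.
    case: A hA hAU hm => [|a0 A'] hA hAU hm.
      have [z zin] : exists z, z \in xs.
        by move: xne; case: (xs) => // z ? _; exists z; rewrite mem_head.
      apply: sig zin _; apply: (proj2 hm) => w; by rewrite in_nil.
    pose a := fun i : 'I_r => nth a0 (a0 :: A') i.
    have [_ [H2 _]] := H a (fun _ => m) m.
    have := H2 (conj (fun j => hAU _ (nth_mem_cons _ _ _ _))
                  (meet_equiv _ _ _ _ _ (fun w => iff_sym (nth_set _ _ _ _ hA w)) hm)).
    move/(IH _ (rcons_neq0 _ _ _)); apply: e_strat_ext => x.
    by split; move/mem_rconsP.
  + move=> B j hB hj hU.
    case: B hB hj => [|b0 B'] hB hj.
      exfalso.
      have hjy : j <= y by apply: (proj2 hj) => w; rewrite in_nil.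
      have [H1 _] := H (fun _ => y) (fun _ => y) y.
      apply: (phi_mem_false _ _ r s n (rcons xs y) y).
        by rewrite mem_rcons mem_head.
      by apply: H1; exists j.
    pose b := fun i : 'I_s => nth b0 (b0 :: B') i.
    have [_ [_ H3]] := H (fun _ => y) b y.
    have [i Hi] := H3 (ex_intro _ j (conj hU
                      (join_equiv _ _ _ _ _ (fun w => iff_sym (nth_set _ _ _ _ hB w)) hj))).
    exists (b i); first exact: nth_mem_cons.
    move/(IH _ (rcons_neq0 _ _ _)): Hi; apply: e_strat_ext => x.
    by split; move/mem_rconsP.
- move=> [Hd [H1 [H2 H3]]] a b c; split; [|split].
  + move=> [z [hz hzc]]; apply/(IH _ (rcons_neq0 _ _ _)).
    apply: e_strat_ext (H1 z c hz hzc) => x.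
    by split; move/mem_rconsP.
  + move=> [ha hm]; apply/(IH _ (rcons_neq0 _ _ _)).
    have hsz : (size [seq a i | i <- enum 'I_r] < r.+1)%N.
      by rewrite size_map size_enum_ord.
    have hin : forall x, x \in [seq a i | i <- enum 'I_r] -> x \in xs.
      by move=> x /map_set [j ->]; apply: ha.
    apply: e_strat_ext (H2 _ c hsz hin
             (meet_equiv _ _ _ _ _ (fun w => iff_sym (map_set _ _ a w)) hm)) => x.
    by split; move/mem_rconsP.
  + move=> [z [hz hj]].
    have hsz : (size [seq b i | i <- enum 'I_s] < s.+1)%N.
      by rewrite size_map size_enum_ord.
    have [x hx he] := H3 _ z hsz
             (join_equiv _ _ _ _ _ (fun w => iff_sym (map_set _ _ b w)) hj) hz.
    case/map_set: hx => i hi; subst x; exists i.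
    apply/(IH _ (rcons_neq0 _ _ _)).
    apply: e_strat_ext he => x.
    by split; move/mem_rconsP.
Qed.

Theorem proposition5p4 (d : Order.disp_t) (P : porderType d) (al be n : nat) :
  (1 <= al)%N -> (1 <= be)%N ->
  (@psiF d P al be n <->
   forall p q : P, ~ (p <= q) ->
     e_strat al.+1 be.+1 n (fun x => x = p) (fun x => x = q)).
Proof.
move=> _ _; split.
  move=> H p q npq.
  apply: e_strat_ext ((main_lemma _ _ al be n [:: p] q isT).1 (H p q npq)).
  by move=> x; rewrite inE; split => [/eqP|->].
move=> H x y nxy.
apply/(main_lemma _ _ al be n [:: x] y isT).
apply: e_strat_ext (H x y nxy) => z.
by rewrite inE; split => [->|/eqP].
Qed.
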